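(* Let $c_{\mathrm{rew}},c_{\mathrm{ver}}>0$ and $c_{\min}=\min\{c_{\mathrm{rew}},c_{\mathrm{ver}}\}$. For every integer $s\ge0$ such that $S_s=\{(a,b)\in\mathbb Z_{\ge0}^2:a\le b,\ 2^sc_{\min}\le c_{\mathrm{rew}}2^b+c_{\mathrm{ver}}2^{b-a}<2^{s+1}c_{\min}\}$ is nonempty, setting $b_s^\star=\max\{b:(a,b)\in S_s\}$, $j_s^\star=\max\{b-a:(a,b)\in S_s\}$, $m_s=\lceil2^{b_s^\star+1}\rceil$ and $k_s=\lceil6\cdot2^{j_s^\star}\rceil$, the quantity $\Lambda_s:=c_{\mathrm{rew}}m_s+c_{\mathrm{ver}}k_s$ satisfies $\Lambda_s\le20\cdot2^sc_{\min}$. *)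

(* Defs.v *)
From mathcomp Require Import all_boot all_order all_algebra.
Set Implicit Arguments. Unset Strict Implicit. Unset Printing Implicit Defensive.
Import Order.TTheory GRing.Theory Num.Theory.
Local Open Scope ring_scope.

Definition cmin (R : archiRealFieldType) (crew cver : R) : R := Num.min crew cver.

Definition inS (R : archiRealFieldType) (crew cver : R) (s a b : nat) : Prop :=
  (a <= b)%N /\
  2%:R ^+ s * cmin crew cver <= crew * 2%:R ^+ b + cver * 2%:R ^+ (b - a) /\
  crew * 2%:R ^+ b + cver * 2%:R ^+ (b - a) < 2%:R ^+ s.+1 * cmin crew cver.

Definition is_bstar (R : archiRealFieldType) (crew cver : R) (s bstar : nat) : Prop :=
  (exists a, inS crew cver s a bstar) /\
  (forall a b, inS crew cver s a b -> (b <= bstar)%N).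

Definition is_jstar (R : archiRealFieldType) (crew cver : R) (s jstar : nat) : Prop :=
  (exists a b, inS crew cver s a b /\ (b - a)%N = jstar) /\
  (forall a b, inS crew cver s a b -> (b - a <= jstar)%N).

Definition Lambda (R : archiRealFieldType) (crew cver : R) (bstar jstar : nat) : R :=
  crew * (Num.ceil (2%:R ^+ bstar.+1 : R))%:~R
  + cver * (Num.ceil (6%:R * 2%:R ^+ jstar : R))%:~R.

(* Main.v *)
Require Import Defs.
From mathcomp Require Import all_boot all_order all_algebra.
From mathcomp Require Import ring lra.
Import Order.TTheory GRing.Theory Num.Theory.
Local Open Scope ring_scope.

Lemma ceil_nat_aux (R : archiRealFieldType) (n : nat) :
  ((Num.ceil (n%:R : R))%:~R : R) = n%:R.
Proof. by rewrite ceilK // rpred_nat. Qed.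

Theorem lemma8 (R : archiRealFieldType) (crew cver : R)
  (hrew : 0 < crew) (hver : 0 < cver) (s : nat)
  (hne : exists a b, inS crew cver s a b)
  (bstar jstar : nat)
  (hb : is_bstar crew cver s bstar) (hj : is_jstar crew cver s jstar) :
  Lambda crew cver bstar jstar <= 20%:R * 2%:R ^+ s * cmin crew cver.
Proof.
case: hb => [[a0 [_ [_ H0]]] _].
case: hj => [[a1 [b1 [[_ [_ H1]] E1]]] _].
rewrite /Lambda -!natrX -natrM !ceil_nat_aux natrM !natrX.
rewrite E1 in H1.
rewrite exprS in H0 H1.
set c := cmin crew cver in H0 H1 *.
set P := 2%:R ^+ s : R in H0 H1 *.
have hc : 0 < c by rewrite /c /cmin lt_min hrew hver.
have hP : 0 < P by rewrite exprn_gt0.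
have p0 : 0 <= P * c by rewrite mulr_ge0 ?ltW.
have q1 : 0 <= cver * 2%:R ^+ (bstar - a0) by apply: mulr_ge0; [exact: ltW | exact: exprn_ge0].
have q2 : 0 <= crew * 2%:R ^+ b1 by apply: mulr_ge0; [exact: ltW | exact: exprn_ge0].
rewrite exprS.
set X := crew * 2%:R ^+ bstar in H0 *.
set Y := cver * 2%:R ^+ jstar in H1 *.
have -> : crew * (2%:R * 2%:R ^+ bstar) + cver * (6%:R * 2%:R ^+ jstar) = 2 * X + 6 * Y.
  by rewrite /X /Y; ring.
have -> : 20%:R * P * c = 20 * (P * c) by ring.
rewrite -mulrA in H0 H1.
lra.
Qed.
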